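(* Let $(G,D,\star)$ be any probabilistic metric space where $\star$ is a continuous triangle function, and let $\mathbb D:\Pi(G)\times\Pi(G)\to\Delta^+$ be $\mathbb D(f,g)=\sup_{x\in G}f(x)\star g(x)$. Then: (1) $\mathbb D(\delta_a,\delta_b)=D(a,b)$ for all $a,b\in G$; (2) $(\Pi(G),\mathbb D,\star)$ is a complete probabilistic metric space; (3) $\delta(G)=\{\delta_a:a\in G\}$ is dense in $(\Pi(G),\mathbb D,\star)$, i.e. for every $f\in\Pi(G)$ there is a sequence $(a_n)\subset G$ with $\mathbb D(\delta_{a_n},f)\xrightarrow{w}\mathcal H_0$.
   Context: A distribution function is a nondecreasing, left-continuous function $F:[-\infty,+\infty]\to[0,1]$ with $F(-\infty)=0$, $F(+\infty)=1$; $\Delta^+$ is the set of distribution functions with $F(0)=0$, ordered pointwise (a complete lattice with maximum $\mathcal H_0$, $\mathcal H_0(t)=0$ for $t\le0$, $1$ for $t>0$). A triangle function is a binary operation $\star$ on $\Delta^+$ that is commutative, associative, nondecreasing in each argument, with $F\star\mathcal H_0=F$. $F_n\xrightarrow{w}F$ means $F_n(t)\to F(t)$ at every continuity point $t\in\mathbb R$ of $F$; $\star$ is continuous if $F_n\star L_n\xrightarrow{w}F\star L$ whenever $F_n\xrightarrow{w}F$, $L_n\xrightarrow{w}L$. A probabilistic metric space $(G,D,\star)$ consists of a set $G$, a triangle function $\star$ and $D:G\times G\to\Delta^+$ with (i) $D(p,q)=\mathcal H_0$ iff $p=q$; (ii) $D(p,q)=D(q,p)$; (iii) $D(p,q)\star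 D(q,r)\le D(p,r)$. A sequence $(z_n)$ is Cauchy if $D(z_n,z_p)\xrightarrow{w}\mathcal H_0$ as $n,p\to\infty$; the space is complete if for every Cauchy sequence $(z_n)$ there is $z\in G$ with $D(z_n,z)\xrightarrow{w}\mathcal H_0$. A map $f:G\to\Delta^+$ is probabilistic $1$-Lipschitz if $D(x,y)\star f(y)\le f(x)$ for all $x,y$. $\delta_a(y)=D(y,a)$. $\Pi(G)$ is the set of probabilistic $1$-Lipschitz maps $f$ for which there is a Cauchy sequence $(a_n)\subset G$ with $D(a_n,x)\xrightarrow{w}f(x)$ for all $x\in G$. *)

(* Defs.v *)
From Stdlib Require Import Reals Classical ClassicalEpsilon FunctionalExtensionality.
Open Scope R_scope.

(* A distribution function F on [-oo,+oo] is represented by its restriction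
   to R (the values F(-oo)=0, F(+oo)=1 are fixed by convention). *)
Definition dfun := R -> R.

Definition inDplus (F : dfun) : Prop :=
  (forall t, 0 <= F t <= 1) /\
  (forall s t, s <= t -> F s <= F t) /\
  (forall t eps, 0 < eps -> exists d, 0 < d /\
      forall s, t - d < s < t -> Rabs (F s - F t) < eps) /\
  F 0 = 0.

Definition ledf (F L : dfun) : Prop := forall t, F t <= L t.

Definition H0 : dfun := fun t => if Rle_dec t 0 then 0 else 1.

Definition triangle_function (star : dfun -> dfun -> dfun) : Prop :=
  (forall F L, inDplus F -> inDplus L -> inDplus (star F L)) /\
  (forall F L, inDplus F -> inDplus L -> star F L = star L F) /\
  (forall F L K, inDplus F -> inDplus L -> inDplus K ->
      star F (star L K) = star (star F L) K) /\
  (forall F F' L, inDplus F -> inDplus F' -> inDplus L -> ledf F F' ->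
      ledf (star F L) (star F' L)) /\
  (forall F, inDplus F -> star F H0 = F).

Definition wconv (Fn : nat -> dfun) (F : dfun) : Prop :=
  forall t, continuity_pt F t -> Un_cv (fun n => Fn n t) (F t).

Definition wconv2 (Fnp : nat -> nat -> dfun) (F : dfun) : Prop :=
  forall t, continuity_pt F t ->
    forall eps, 0 < eps -> exists N : nat, forall n p : nat, (n >= N)%nat -> (p >= N)%nat ->
      Rabs (Fnp n p t - F t) < eps.

Definition continuous_tf (star : dfun -> dfun -> dfun) : Prop :=
  forall (Fn Ln : nat -> dfun) (F L : dfun),
    (forall n, inDplus (Fn n)) -> (forall n, inDplus (Ln n)) -> inDplus F -> inDplus L ->
    wconv Fn F -> wconv Ln L -> wconv (fun n => star (Fn n) (Ln n)) (star F L).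

Definition PM_space {T : Type} (P : T -> Prop) (D : T -> T -> dfun)
  (star : dfun -> dfun -> dfun) : Prop :=
  (forall p q, P p -> P q -> inDplus (D p q)) /\
  (forall p q, P p -> P q -> (D p q = H0 <-> p = q)) /\
  (forall p q, P p -> P q -> D p q = D q p) /\
  (forall p q r, P p -> P q -> P r -> ledf (star (D p q) (D q r)) (D p r)).

Definition cauchy {T : Type} (D : T -> T -> dfun) (z : nat -> T) : Prop :=
  wconv2 (fun n p => D (z n) (z p)) H0.

Definition complete {T : Type} (P : T -> Prop) (D : T -> T -> dfun) : Prop :=
  forall z : nat -> T, (forall n, P (z n)) -> cauchy D z ->
    exists w, P w /\ wconv (fun n => D (z n) w) H0.

Definition delta {G : Type} (D : G -> G -> dfun) (a : G) : G -> dfun :=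
  fun y => D y a.

Definition InPi {G : Type} (D : G -> G -> dfun) (star : dfun -> dfun -> dfun)
  (f : G -> dfun) : Prop :=
  (forall x, inDplus (f x)) /\
  (forall x y, ledf (star (D x y) (f y)) (f x)) /\
  (exists a : nat -> G, cauchy D a /\ forall x, wconv (fun n => D (a n) x) (f x)).

Definition is_supD (S : dfun -> Prop) (F : dfun) : Prop :=
  inDplus F /\ (forall H, S H -> ledf H F) /\
  (forall U, inDplus U -> (forall H, S H -> ledf H U) -> ledf F U).

Definition supD (S : dfun -> Prop) : dfun :=
  epsilon (inhabits H0) (is_supD S).

Definition DD {G : Type} (star : dfun -> dfun -> dfun) (f g : G -> dfun) : dfun :=
  supD (fun H => exists x : G, H = star (f x) (g x)).

(* Main.v *)
Require Import Defs.
From Stdlib Require Import Reals Lra Lia Classical ClassicalEpsilon FunctionalExtensionality PropExtensionality.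
Open Scope R_scope.

Lemma dp_bnd F : inDplus F -> forall t, 0 <= F t <= 1.
Proof. intros [H _]; exact H. Qed.
Lemma dp_mono F : inDplus F -> forall s t, s <= t -> F s <= F t.
Proof. intros [_ [H _]]; exact H. Qed.
Lemma dp_lc F : inDplus F -> forall t eps, 0 < eps -> exists d, 0 < d /\
      forall s, t - d < s < t -> Rabs (F s - F t) < eps.
Proof. intros [_ [_ [H _]]]; exact H. Qed.
Lemma dp_0 F : inDplus F -> F 0 = 0.
Proof. intros [_ [_ [_ H]]]; exact H. Qed.
Lemma dp_neg F : inDplus F -> forall t, t <= 0 -> F t = 0.
Proof. intros HF t Ht. pose proof (dp_mono F HF t 0 Ht). pose proof (dp_bnd F HF t).
  rewrite (dp_0 F HF) in H. lra. Qed.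

Lemma H0_pos t : 0 < t -> H0 t = 1.
Proof. intros. unfold H0. destruct (Rle_dec t 0); lra. Qed.
Lemma H0_npos t : t <= 0 -> H0 t = 0.
Proof. intros. unfold H0. destruct (Rle_dec t 0); lra. Qed.

Lemma H0_in : inDplus H0.
Proof. split; [|split; [|split]].
- intros t; unfold H0; destruct (Rle_dec t 0); lra.
- intros s t Hst; unfold H0; destruct (Rle_dec s 0); destruct (Rle_dec t 0); lra.
- intros t eps He. destruct (Rle_dec t 0).
  + exists 1. split; [lra|]. intros s Hs. rewrite !H0_npos by lra. rewrite Rminus_0_r, Rabs_R0; lra.
  + exists t. split; [lra|]. intros s Hs. rewrite !H0_pos by lra. rewrite Rminus_diag, Rabs_R0; lra.
- apply H0_npos; lra.
Qed.

Lemma dp_le_H0 F : inDplus F -> ledf F H0.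
Proof. intros HF t. destruct (Rle_dec t 0).
  - rewrite H0_npos, dp_neg; auto; lra.
  - rewrite H0_pos by lra. apply dp_bnd; auto. Qed.

Lemma cont_elim F t : continuity_pt F t -> forall eps, 0 < eps ->
  exists alp, 0 < alp /\ forall x, Rabs (x - t) < alp -> Rabs (F x - F t) < eps.
Proof. intros H eps He. destruct (H eps He) as [alp [Ha Hx]]. exists alp; split; auto.
  intros x Hxt. destruct (Req_dec x t) as [->|Hne].
  - rewrite Rminus_diag, Rabs_R0; lra.
  - apply (Hx x). split; [split; [exact I| auto]|exact Hxt]. Qed.

Lemma cont_intro F t : (forall eps, 0 < eps ->
  exists alp, 0 < alp /\ forall x, Rabs (x - t) < alp -> Rabs (F x - F t) < eps) -> continuity_pt F t.
Proof. intros H eps He. destruct (H eps He) as [alp [Ha Hx]]. exists alp; split; auto.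
  intros x [_ Hxt]. apply Hx. exact Hxt. Qed.

Lemma locconst_cont F t d : 0 < d -> (forall x, Rabs (x - t) < d -> F x = F t) -> continuity_pt F t.
Proof. intros Hd H. apply cont_intro. intros eps He. exists d. split; auto.
  intros x Hx. rewrite H by auto. rewrite Rminus_diag, Rabs_R0; lra. Qed.

Lemma H0_cont t : 0 < t -> continuity_pt H0 t.
Proof. intros Ht. apply (locconst_cont _ _ t); auto. intros x Hx.
  apply Rabs_def2 in Hx. rewrite !H0_pos by lra. auto. Qed.

Lemma cv_const c : Un_cv (fun _ => c) c.
Proof. intros e He. exists O. intros. unfold Rdist. rewrite Rminus_diag, Rabs_R0; lra. Qed.

Lemma cv_lb u a v : Un_cv u a -> (exists N, forall n, (n >= N)%nat -> v <= u n) -> v <= a.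
Proof. intros Hu [N HN]. destruct (Rle_dec v a); auto. exfalso.
  destruct (Hu (v - a)) as [M HM]; [lra|]. specialize (HM (max N M) ltac:(lia)).
  specialize (HN (max N M) ltac:(lia)). unfold Rdist in HM. apply Rabs_def2 in HM. lra. Qed.

Lemma cv_ub u a v : Un_cv u a -> (exists N, forall n, (n >= N)%nat -> u n <= v) -> a <= v.
Proof. intros Hu [N HN]. destruct (Rle_dec a v); auto. exfalso.
  destruct (Hu (a - v)) as [M HM]; [lra|]. specialize (HM (max N M) ltac:(lia)).
  specialize (HN (max N M) ltac:(lia)). unfold Rdist in HM. apply Rabs_def2 in HM. lra. Qed.

Lemma cv_ev_gt u a v : Un_cv u a -> v < a -> exists N, forall n, (n >= N)%nat -> v < u n.
Proof. intros Hu Hv. destruct (Hu (a - v)) as [N HN]; [lra|]. exists N. intros n Hn.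
  specialize (HN n Hn). unfold Rdist in HN. apply Rabs_def2 in HN. lra. Qed.

Lemma cv_ev_lt u a v : Un_cv u a -> a < v -> exists N, forall n, (n >= N)%nat -> u n < v.
Proof. intros Hu Hv. destruct (Hu (v - a)) as [N HN]; [lra|]. exists N. intros n Hn.
  specialize (HN n Hn). unfold Rdist in HN. apply Rabs_def2 in HN. lra. Qed.

Lemma wconv_const F : wconv (fun _ => F) F.
Proof. intros t _. apply cv_const. Qed.

Lemma wconv_H0_intro Fn : (forall n, inDplus (Fn n)) ->
  (forall t, 0 < t -> forall e, 0 < e -> exists N, forall n, (n >= N)%nat -> 1 - e < Fn n t) ->
  wconv Fn H0.
Proof. intros Hin H t _ e He. destruct (Rle_dec t 0) as [r|r].
  - exists O. intros k _. rewrite H0_npos by auto. rewrite (dp_neg _ (Hin k) t r). unfold Rdist. rewrite Rminus_0_r, Rabs_R0; lra.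
  - destruct (H t ltac:(lra) e He) as [N HN]. exists N. intros n Hn. specialize (HN n Hn).
    rewrite H0_pos by lra. unfold Rdist. pose proof (dp_bnd _ (Hin n) t).
    rewrite Rabs_left1 by lra. lra. Qed.

Lemma wconv_H0_elim Fn : wconv Fn H0 -> forall t, 0 < t -> forall e, 0 < e ->
  exists N, forall n, (n >= N)%nat -> 1 - e < Fn n t.
Proof. intros H t Ht e He. specialize (H t (H0_cont t Ht)). rewrite H0_pos in H by auto.
  apply (cv_ev_gt _ _ _ H). lra. Qed.

Definition nstep (F : R -> R) (p : R * R) : R * R :=
  let l := fst p in let r := snd p in let h := (r - l) / 4 in
  if Rle_dec (F (l + 2*h) - F (l + h)) (F (l + 3*h) - F (l + 2*h))
  then (l + h, l + 2*h) else (l + 2*h, l + 3*h).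

Fixpoint nseq F a b n : R * R := match n with O => (a, b) | S n => nstep F (nseq F a b n) end.

Lemma nstep_prop F l r : (forall s t, s <= t -> F s <= F t) -> l < r ->
  l < fst (nstep F (l, r)) /\ fst (nstep F (l, r)) < snd (nstep F (l, r)) /\
  snd (nstep F (l, r)) < r /\
  F (snd (nstep F (l, r))) - F (fst (nstep F (l, r))) <= (F r - F l) / 2.
Proof. intros Hm Hlr. unfold nstep; simpl.
  set (h := (r - l) / 4).
  assert (Hh : 0 < h) by (unfold h; lra).
  assert (A1 := Hm l (l+h) ltac:(lra)). assert (A2 := Hm (l+3*h) r ltac:(unfold h; lra)).
  assert (A3 := Hm (l+h) (l+2*h) ltac:(lra)). assert (A4 := Hm (l+2*h) (l+3*h) ltac:(lra)).
  destruct (Rle_dec _ _); simpl; repeat split; unfold h in *; lra.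
Qed.

Lemma pow2_gt n : INR n < 2 ^ n.
Proof. induction n. simpl; lra. rewrite S_INR. simpl.
  assert (1 <= 2 ^ n). { clear IHn. induction n; simpl; lra. } lra. Qed.

Lemma cont_point_exists F : (forall s t, s <= t -> F s <= F t) -> (forall t, 0 <= F t <= 1) ->
  forall a b, a < b -> exists c, a < c < b /\ continuity_pt F c.
Proof.
  intros Hm Hb a b Hab.
  set (L := fun n => fst (nseq F a b n)). set (U := fun n => snd (nseq F a b n)).
  assert (Hinv : forall n, L n < U n /\ F (U n) - F (L n) <= (F b - F a) / 2 ^ n).
  { induction n.
    - unfold L, U; simpl. lra.
    - destruct IHn as [H1 H2]. unfold L, U in *. simpl.
      destruct (nseq F a b n) as [l r] eqn:E. simpl in *.
      destruct (nstep_prop F l r Hm H1) as [B1 [B2 [B3 B4]]]. split; [auto|].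
      assert (0 < 2 ^ n) by (apply pow_lt; lra).
      apply Rle_trans with ((F r - F l) / 2); auto.
      apply Rle_trans with (((F b - F a) / 2 ^ n) / 2); [lra|]. right. field. lra. }
  assert (Hstep : forall n, L n < L (S n) /\ U (S n) < U n).
  { intros n. unfold L, U. simpl. destruct (nseq F a b n) as [l r] eqn:E. simpl.
    destruct (Hinv n) as [H1 _]. unfold L, U in H1. rewrite E in H1. simpl in H1.
    destruct (nstep_prop F l r Hm H1) as [B1 [B2 [B3 B4]]]. split; auto. }
  assert (Hmon : forall n k, L n <= L (n + k)%nat /\ U (n + k)%nat <= U n).
  { intros n k. induction k. rewrite Nat.add_0_r. lra.
    rewrite Nat.add_succ_r. destruct (Hstep (n + k)%nat). lra. }
  assert (Hlu : forall m n, L m <= U n).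
  { intros m n. destruct (Compare_dec.le_lt_dec m n).
    - replace n with (m + (n - m))%nat by lia. destruct (Hmon m (n - m)%nat). destruct (Hinv (m + (n-m))%nat). lra.
    - replace m with (n + (m - n))%nat by lia. destruct (Hmon n (m - n)%nat). destruct (Hinv (n + (m-n))%nat). lra. }
  set (E := fun x => exists n, x = L n).
  assert (Hbd : bound E). { exists (U O). intros x [n ->]. apply Hlu. }
  destruct (completeness E Hbd (ex_intro _ (L O) (ex_intro _ O eq_refl))) as [c [Hc1 Hc2]].
  assert (HLc : forall n, L n <= c) by (intros n; apply Hc1; exists n; auto).
  assert (HcU : forall n, c <= U n) by (intros n; apply Hc2; intros x [m ->]; apply Hlu).
  assert (HLc' : forall n, L n < c) by (intros n; destruct (Hstep n); specialize (HLc (S n)); lra).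
  assert (HcU' : forall n, c < U n) by (intros n; destruct (Hstep n); specialize (HcU (S n)); lra).
  exists c. split.
  - split. specialize (HLc' O). unfold L in HLc'; simpl in HLc'; lra.
    specialize (HcU' O). unfold U in HcU'; simpl in HcU'; lra.
  - apply cont_intro. intros eps He.
    destruct (archimed_cor1 eps He) as [N [HN HN0]].
    exists (Rmin (c - L N) (U N - c)). split.
    + apply Rmin_pos; [specialize (HLc' N)|specialize (HcU' N)]; lra.
    + intros x Hx. apply Rabs_def2 in Hx. destruct Hx as [Hx1 Hx2].
      assert (Hm1 := Rmin_l (c - L N) (U N - c)). assert (Hm2 := Rmin_r (c - L N) (U N - c)).
      assert (Fx1 := Hm (L N) x ltac:(lra)). assert (Fx2 := Hm x (U N) ltac:(lra)).
      assert (Fc1 := Hm (L N) c (HLc N)). assert (Fc2 := Hm c (U N) (HcU N)).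
      destruct (Hinv N) as [_ Hd].
      assert (HFb : F b - F a <= 1) by (pose proof (Hb a); pose proof (Hb b); lra).
      assert (Hp : 0 < 2 ^ N) by (apply pow_lt; lra).
      assert (Hq : (F b - F a) / 2 ^ N < eps).
      { apply Rle_lt_trans with (/ INR N); [|auto].
        pose proof (pow2_gt N). assert (0 < INR N) by (apply lt_0_INR; lia).
        unfold Rdiv. apply Rle_trans with (1 * / 2 ^ N).
        apply Rmult_le_compat_r; [left; apply Rinv_0_lt_compat; lra|lra].
        rewrite Rmult_1_l. left. apply Rinv_lt_contravar; [nra|lra]. }
      apply Rabs_def1; lra.
Qed.

Lemma cpt F : inDplus F -> forall a b, a < b -> exists c, a < c < b /\ continuity_pt F c.
Proof. intros HF. apply cont_point_exists. apply dp_mono; auto. apply dp_bnd; auto. Qed.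

Lemma approx_left F G : inDplus F -> inDplus G -> forall t eps, 0 < eps ->
  exists s, s < t /\ continuity_pt F s /\ G t - eps < G s.
Proof. intros HF HG t eps He. destruct (dp_lc G HG t eps He) as [d [Hd Hs]].
  destruct (cpt F HF (t - d) t ltac:(lra)) as [s [Hs1 Hs2]]. exists s. repeat split; try lra; auto.
  specialize (Hs s Hs1). apply Rabs_def2 in Hs. lra. Qed.

Lemma wlim_le Fn Gn F G : (forall n, inDplus (Gn n)) -> inDplus F -> inDplus G ->
  wconv Fn F -> wconv Gn G -> (forall n, ledf (Fn n) (Gn n)) -> ledf F G.
Proof. intros HGn HF HG HcF HcG Hle t. apply Rnot_lt_le. intro Hlt.
  set (e := (F t - G t) / 2).
  destruct (approx_left F F HF HF t e ltac:(unfold e; lra)) as [s [Hs1 [Hs2 Hs3]]].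
  destruct (cpt G HG s t Hs1) as [s' [Hs'1 Hs'2]].
  assert (F s <= G s').
  { apply (Rle_cv_lim (Un := fun n => Fn n s) (Vn := fun n => Gn n s')).
    - intros n. apply Rle_trans with (Gn n s). apply Hle. apply dp_mono; auto; lra.
    - apply HcF; auto.
    - apply HcG; auto. }
  pose proof (dp_mono G HG s' t ltac:(lra)). unfold e in *. lra. Qed.

Lemma wlim_lb X F : (forall k, inDplus (X k)) -> inDplus F -> wconv X F ->
  forall t1 t v, t1 < t -> (exists N, forall k, (k >= N)%nat -> v <= X k t1) -> v <= F t.
Proof. intros HX HF Hc t1 t v Ht [N HN]. destruct (cpt F HF t1 t Ht) as [s [Hs1 Hs2]].
  apply Rle_trans with (F s); [|apply dp_mono; auto; lra].
  apply (cv_lb _ _ _ (Hc s Hs2)). exists N. intros k Hk. apply Rle_trans with (X k t1); auto.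
  apply dp_mono; auto; lra. Qed.

Lemma wlim_ub X F : (forall k, inDplus (X k)) -> inDplus F -> wconv X F ->
  forall t1 t v, t1 < t -> (exists N, forall k, (k >= N)%nat -> X k t <= v) -> F t1 <= v.
Proof. intros HX HF Hc t1 t v Ht [N HN]. destruct (cpt F HF t1 t Ht) as [s [Hs1 Hs2]].
  apply Rle_trans with (F s); [apply dp_mono; auto; lra|].
  apply (cv_ub _ _ _ (Hc s Hs2)). exists N. intros k Hk. apply Rle_trans with (X k t); auto.
  apply dp_mono; auto; lra. Qed.

Lemma squeeze X F : inDplus F ->
  (forall t' t eta, t' < t -> 0 < eta -> exists N, forall n, (n >= N)%nat -> F t' - eta <= X n t) ->
  (forall t' t eta, t' < t -> 0 < eta -> exists N, forall n, (n >= N)%nat -> X n t' <= F t + eta) ->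
  wconv X F.
Proof. intros HF Hi Hii t Hct e He.
  destruct (cont_elim F t Hct (e/3) ltac:(lra)) as [a [Ha Hx]].
  assert (A1 := Hx (t - a/2)). assert (A2 := Hx (t + a/2)).
  replace (t - a / 2 - t) with (- (a/2)) in A1 by ring. replace (t + a / 2 - t) with (a/2) in A2 by ring.
  rewrite Rabs_Ropp, Rabs_right in A1 by lra. rewrite Rabs_right in A2 by lra.
  specialize (A1 ltac:(lra)). specialize (A2 ltac:(lra)).
  apply Rabs_def2 in A1. apply Rabs_def2 in A2.
  destruct (Hi (t - a/2) t (e/3) ltac:(lra) ltac:(lra)) as [N1 H1].
  destruct (Hii t (t + a/2) (e/3) ltac:(lra) ltac:(lra)) as [N2 H2].
  exists (max N1 N2). intros n Hn. specialize (H1 n ltac:(lia)). specialize (H2 n ltac:(lia)).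
  unfold Rdist. apply Rabs_def1; lra. Qed.

Lemma wlim_exists X : (forall n, inDplus (X n)) ->
  (forall t' t eta, t' < t -> 0 < eta -> exists N, forall n m, (n >= N)%nat -> (m >= N)%nat ->
      X m t' <= X n t + eta) ->
  exists F, inDplus F /\ wconv X F.
Proof. intros HX Cy.
  set (A := fun t r => exists s, s < t /\ exists N, forall n, (n >= N)%nat -> r <= X n s).
  assert (Hb : forall t, bound (A t)).
  { intros t. exists 1. intros r [s [_ [N HN]]]. specialize (HN N (Nat.le_refl _)).
    pose proof (dp_bnd _ (HX N) s). lra. }
  assert (Hne : forall t, exists r, A t r).
  { intros t. exists 0. exists (t - 1). split; [lra|]. exists O. intros n _. apply dp_bnd; auto. }
  set (F := fun t => proj1_sig (completeness (A t) (Hb t) (Hne t))).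
  assert (HFl : forall t, is_lub (A t) (F t)) by (intros t; unfold F; destruct completeness; auto).
  assert (HF0 : forall t, 0 <= F t).
  { intros t. destruct (HFl t) as [H _]. apply H. exists (t - 1). split; [lra|]. exists O. intros n _. apply dp_bnd; auto. }
  assert (HF1 : forall t, F t <= 1).
  { intros t. destruct (HFl t) as [_ H]. apply H. intros r [s [_ [N HN]]]. specialize (HN N (Nat.le_refl _)).
    pose proof (dp_bnd _ (HX N) s). lra. }
  assert (HAm : forall t1 t2 r, t1 <= t2 -> A t1 r -> A t2 r).
  { intros t1 t2 r H [s [Hs HN]]. exists s. split; [lra|auto]. }
  assert (HFm : forall s t, s <= t -> F s <= F t).
  { intros s t Hst. destruct (HFl s) as [_ H]. apply H. intros r Hr. destruct (HFl t) as [H' _].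
    apply H'. eapply HAm; eauto. }
  assert (Happ : forall t e, 0 < e -> exists r, A t r /\ F t - e < r).
  { intros t e He. apply not_all_not_ex. intro Hn. destruct (HFl t) as [_ H].
    assert (F t <= F t - e); [|lra]. apply H. intros r Hr. specialize (Hn r).
    apply Rnot_lt_le. intro; apply Hn; split; auto. }
  assert (HFin : inDplus F).
  { split; [|split; [|split]].
    - intros t; split; auto.
    - exact HFm.
    - intros t e He. destruct (Happ t e He) as [r [[s [Hs HN]] Hr]].
      exists (t - s). split; [lra|]. intros s' Hs'.
      assert (F s' >= r). { destruct (HFl s') as [H _]. apply Rle_ge, H. exists s. split; [lra|auto]. }
      pose proof (HFm s' t ltac:(lra)). apply Rabs_def1; lra.
    - apply Rle_antisym; auto. destruct (HFl 0) as [_ H]. apply H. intros r [s [Hs [N HN]]].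
      specialize (HN N (Nat.le_refl _)). rewrite (dp_neg _ (HX N) s) in HN; lra. }
  exists F. split; auto. intros t Hct e He.
  destruct (cont_elim F t Hct (e/2) ltac:(lra)) as [a [Ha Hx]].
  destruct (Happ t (e/2) ltac:(lra)) as [r [[s [Hs [N1 HN1]]] Hr]].
  destruct (Cy t (t + a/4) (e/4) ltac:(lra) ltac:(lra)) as [N2 HN2].
  assert (A2 := Hx (t + a/2)). replace (t + a / 2 - t) with (a/2) in A2 by ring.
  rewrite Rabs_right in A2 by lra. specialize (A2 ltac:(lra)). apply Rabs_def2 in A2.
  exists (max N1 N2). intros m Hm. unfold Rdist. apply Rabs_def1.
  - assert (X m t - e/4 <= F (t + a/2)).
    { destruct (HFl (t + a/2)) as [H _]. apply H. exists (t + a/4). split; [lra|].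
      exists N2. intros n Hn. specialize (HN2 n m Hn ltac:(lia)). lra. }
    lra.
  - specialize (HN1 m ltac:(lia)). pose proof (dp_mono _ (HX m) s t ltac:(lra)). lra.
Qed.

Definition psupset (S : dfun -> Prop) t v := v = 0 \/ exists H, S H /\ inDplus H /\ v = H t.

Lemma psup_bound S t : bound (psupset S t).
Proof. exists 1. intros v [->|[H [_ [HH ->]]]]; [lra|apply dp_bnd; auto]. Qed.
Lemma psup_ne S t : exists v, psupset S t v.
Proof. exists 0; left; auto. Qed.

Definition psup S : dfun := fun t => proj1_sig (completeness _ (psup_bound S t) (psup_ne S t)).

Lemma psup_lub S t : is_lub (psupset S t) (psup S t).
Proof. unfold psup. destruct completeness; auto. Qed.

Lemma psup_ge S H t : S H -> inDplus H -> H t <= psup S t.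
Proof. intros. apply (proj1 (psup_lub S t)). right. exists H; auto. Qed.
Lemma psup_ge0 S t : 0 <= psup S t.
Proof. apply (proj1 (psup_lub S t)). left; auto. Qed.
Lemma psup_le S t b : 0 <= b -> (forall H, S H -> inDplus H -> H t <= b) -> psup S t <= b.
Proof. intros. apply (proj2 (psup_lub S t)). intros v [->|[H' [? [? ->]]]]; auto. Qed.
Lemma psup_app S t e : 0 < e -> exists v, psupset S t v /\ psup S t - e < v.
Proof. intros He. apply not_all_not_ex. intro Hn.
  assert (psup S t <= psup S t - e); [|lra]. apply (proj2 (psup_lub S t)).
  intros r Hr. specialize (Hn r). apply Rnot_lt_le. intro; apply Hn; split; auto. Qed.

Lemma psup_is S : (forall H, S H -> inDplus H) -> is_supD S (psup S).
Proof. intros HS.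
  assert (Hm : forall s t, s <= t -> psup S s <= psup S t).
  { intros s t Hst. apply psup_le. apply psup_ge0. intros H HH Hin.
    apply Rle_trans with (H t). apply dp_mono; auto. apply psup_ge; auto. }
  split; [split; [|split; [|split]]|split].
  - intros t. split. apply psup_ge0. apply psup_le; [lra|]. intros; apply dp_bnd; auto.
  - exact Hm.
  - intros t e He. destruct (psup_app S t (e/2) ltac:(lra)) as [v [[->|[H [HH [Hin ->]]]] Hv]].
    + exists 1. split; [lra|]. intros s Hs. pose proof (Hm s t ltac:(lra)). pose proof (psup_ge0 S s).
      apply Rabs_def1; lra.
    + destruct (dp_lc H Hin t (e/2) ltac:(lra)) as [d [Hd Hs]]. exists d. split; auto.
      intros s Hs'. specialize (Hs s Hs'). apply Rabs_def2 in Hs. pose proof (Hm s t ltac:(lra)).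
      pose proof (psup_ge S H s HH Hin). apply Rabs_def1; lra.
  - apply Rle_antisym; [|apply psup_ge0]. apply psup_le; [lra|]. intros H _ Hin. rewrite dp_0; auto; lra.
  - intros H HH t. apply psup_ge; auto.
  - intros U HU Hub t. apply psup_le. apply dp_bnd; auto. intros H HH _. apply Hub; auto.
Qed.

Lemma is_supD_unique S F F' : is_supD S F -> is_supD S F' -> F = F'.
Proof. intros [HF [H1 H2]] [HF' [H1' H2']]. apply functional_extensionality. intros t.
  apply Rle_antisym. apply H2; auto. apply H2'; auto. Qed.

Lemma supD_is S : (forall H, S H -> inDplus H) -> is_supD S (supD S).
Proof. intros HS. unfold supD. apply epsilon_spec. exists (psup S). apply psup_is; auto. Qed.


Lemma supD_eq S F : (forall H, S H -> inDplus H) -> is_supD S F -> supD S = F.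
Proof. intros HS H. apply (is_supD_unique S); auto. apply supD_is; auto. Qed.

Lemma supD_psup S : (forall H, S H -> inDplus H) -> supD S = psup S.
Proof. intros HS. apply supD_eq; auto. apply psup_is; auto. Qed.

Lemma supD_in S : (forall H, S H -> inDplus H) -> inDplus (supD S).
Proof. intros HS. apply (supD_is S HS). Qed.

Lemma supD_ge S H : (forall H, S H -> inDplus H) -> S H -> ledf H (supD S).
Proof. intros HS HH. apply (supD_is S HS); auto. Qed.

Lemma supD_approx S : (forall H, S H -> inDplus H) -> (exists H, S H) ->
  forall t e, 0 < e -> exists H, S H /\ supD S t - e < H t.
Proof. intros HS [H1 HH1] t e He. rewrite supD_psup by auto.
  destruct (psup_app S t e He) as [v [[->|[H [HH [Hin ->]]]] Hv]].
  - exists H1. split; auto. pose proof (dp_bnd H1 (HS H1 HH1) t). lra.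
  - exists H; auto. Qed.





Lemma st_in star (Htf : triangle_function star) F L : inDplus F -> inDplus L -> inDplus (star F L).
Proof. destruct Htf as [H _]. apply H. Qed.
Lemma st_comm star (Htf : triangle_function star) F L : inDplus F -> inDplus L -> star F L = star L F.
Proof. destruct Htf as [_ [H _]]. apply H. Qed.
Lemma st_assoc star (Htf : triangle_function star) F L K : inDplus F -> inDplus L -> inDplus K ->
  star F (star L K) = star (star F L) K.
Proof. destruct Htf as [_ [_ [H _]]]. apply H. Qed.
Lemma st_mono_l star (Htf : triangle_function star) F F' L : inDplus F -> inDplus F' -> inDplus L ->
  ledf F F' -> ledf (star F L) (star F' L).
Proof. destruct Htf as [_ [_ [_ [H _]]]]. apply H. Qed.
Lemma st_H0r star (Htf : triangle_function star) F : inDplus F -> star F H0 = F.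
Proof. destruct Htf as [_ [_ [_ [_ H]]]]. apply H. Qed.
Lemma st_H0l star (Htf : triangle_function star) F : inDplus F -> star H0 F = F.
Proof. intros. rewrite st_comm; auto. apply st_H0r; auto. apply H0_in. Qed.
Lemma st_mono_r star (Htf : triangle_function star) F L L' : inDplus F -> inDplus L -> inDplus L' ->
  ledf L L' -> ledf (star F L) (star F L').
Proof. intros. rewrite (st_comm star Htf F L), (st_comm star Htf F L') by auto. apply st_mono_l; auto. Qed.
Lemma st_mono2 star (Htf : triangle_function star) F F' L L' : inDplus F -> inDplus F' -> inDplus L -> inDplus L' ->
  ledf F F' -> ledf L L' -> ledf (star F L) (star F' L').
Proof. intros. intros t. apply Rle_trans with (star F' L t).
  apply st_mono_l; auto. apply st_mono_r; auto. Qed.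

Definition Ystep (c t' : R) : dfun := fun s => if Rle_dec s t' then 0 else c.

Lemma Ystep_in c t' : 0 <= c <= 1 -> 0 <= t' -> inDplus (Ystep c t').
Proof. intros Hc Ht. unfold Ystep. split; [|split; [|split]].
- intros t. destruct (Rle_dec t t'); lra.
- intros s t Hst. destruct (Rle_dec s t'); destruct (Rle_dec t t'); lra.
- intros t e He. destruct (Rle_dec t t').
  + exists 1. split; [lra|]. intros s Hs. destruct (Rle_dec s t'); [|lra]. rewrite Rminus_0_r, Rabs_R0; lra.
  + exists (t - t'). split; [lra|]. intros s Hs. destruct (Rle_dec s t'); [lra|]. rewrite Rminus_diag, Rabs_R0; lra.
- destruct (Rle_dec 0 t'); lra.
Qed.

Lemma fin_ev (P : nat -> nat -> Prop) M : (forall j, (j <= M)%nat -> exists N, forall n, (n >= N)%nat -> P j n) ->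
  exists N, forall j, (j <= M)%nat -> forall n, (n >= N)%nat -> P j n.
Proof. induction M; intros H.
  - destruct (H O (Nat.le_refl _)) as [N HN]. exists N. intros j Hj n Hn. replace j with O by lia. auto.
  - destruct IHM as [N1 H1]. intros j Hj; apply H; lia.
    destruct (H (S M) (Nat.le_refl _)) as [N2 H2]. exists (max N1 N2). intros j Hj n Hn.
    destruct (Nat.eq_dec j (S M)) as [->|Hne]. apply H2; lia. apply H1; lia.
Qed.

Lemma floor_ex c h : 0 <= c -> 0 < h -> forall k, (exists j, INR j * h <= c < INR j * h + h) \/ INR k * h <= c.
Proof. intros Hc Hh k. induction k.
  - right. simpl. lra.
  - destruct IHk as [H|H]; [left; auto|]. destruct (Rlt_dec c (INR k * h + h)).
    + left. exists k. lra.
    + right. rewrite S_INR. lra.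
Qed.

Lemma unif1 star (Htf : triangle_function star) (Hcont : continuous_tf star) En :
  (forall n, inDplus (En n)) -> wconv En H0 ->
  forall t' t eta, 0 <= t' -> t' < t -> 0 < eta ->
  exists N, forall n, (n >= N)%nat -> forall X, inDplus X -> X t' - eta <= star X (En n) t.
Proof. intros HEn Hc t' t eta Ht' Htt He.
  assert (HY : forall c, 0 <= c <= 1 -> Un_cv (fun n => star (Ystep c t') (En n) t) c).
  { intros c Hc01. assert (Hin := Ystep_in c t' Hc01 Ht').
    assert (W := Hcont (fun _ => Ystep c t') En (Ystep c t') H0 (fun _ => Hin) HEn Hin H0_in
       (wconv_const _) Hc).
    rewrite st_H0r in W by auto. simpl in W.
    assert (Hct : continuity_pt (Ystep c t') t).
    { apply (locconst_cont _ _ (t - t')); [lra|]. intros x Hx. apply Rabs_def2 in Hx. unfold Ystep.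
      destruct (Rle_dec x t'); destruct (Rle_dec t t'); lra. }
    specialize (W t Hct). unfold Ystep at 2 in W. destruct (Rle_dec t t'); [lra|]. exact W. }
  destruct (archimed_cor1 (eta/2) ltac:(lra)) as [M [HM HM0]].
  set (h := / INR M). assert (HMp : 0 < INR M) by (apply lt_0_INR; lia).
  assert (Hh : 0 < h) by (apply Rinv_0_lt_compat; auto).
  assert (HMh : INR M * h = 1) by (unfold h; field; lra).
  assert (Hj01 : forall j, (j <= M)%nat -> 0 <= INR j * h <= 1).
  { intros j Hj. split. apply Rmult_le_pos; [apply pos_INR|lra]. rewrite <- HMh.
    apply Rmult_le_compat_r; [lra|]. apply le_INR; auto. }
  destruct (fin_ev (fun j n => INR j * h - eta/2 < star (Ystep (INR j * h) t') (En n) t) M) as [N HN].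
  { intros j Hj. apply (cv_ev_gt _ _ _ (HY _ (Hj01 j Hj))). lra. }
  exists N. intros n Hn X HX.
  assert (Hcx := dp_bnd X HX t').
  destruct (floor_ex (X t') h ltac:(lra) Hh (S M)) as [[j Hjc]|Hk].
  2:{ rewrite S_INR in Hk. lra. }
  assert (HjM : (j <= M)%nat).
  { apply INR_le. apply Rmult_le_reg_r with h; auto. lra. }
  assert (Hle : ledf (Ystep (INR j * h) t') X).
  { intros s. unfold Ystep. destruct (Rle_dec s t'). apply dp_bnd; auto.
    pose proof (dp_mono X HX t' s ltac:(lra)). lra. }
  assert (Hm := st_mono_l star Htf _ _ (En n) (Ystep_in _ t' (Hj01 j HjM) Ht') HX (HEn n) Hle t).
  specialize (HN j HjM n Hn). unfold h in *. lra.
Qed.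

Lemma unif star (Htf : triangle_function star) (Hcont : continuous_tf star) :
  forall t' t eta, t' < t -> 0 < eta -> exists d, 0 < d /\
    forall E X, inDplus E -> inDplus X -> 1 - d < E d -> X t' - eta <= star X E t.
Proof. intros t' t eta Htt He. destruct (Rlt_dec t' 0) as [Hneg|Hpos].
  { exists 1. split; [lra|]. intros E X HE HX _. rewrite (dp_neg X HX t') by lra.
    pose proof (dp_bnd _ (st_in star Htf X E HX HE) t). lra. }
  apply NNPP. intro Hn.
  set (d := fun n : nat => / INR (S n)).
  assert (Hd : forall n, 0 < d n) by (intros n; unfold d; apply Rinv_0_lt_compat, lt_0_INR; lia).
  set (P := fun n (p : dfun * dfun) => inDplus (fst p) /\ inDplus (snd p) /\ 1 - d n < fst p (d n) /\
        star (snd p) (fst p) t < snd p t' - eta).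
  assert (HP : forall n, exists p, P n p).
  { intros n. apply NNPP. intro Hn2. apply Hn. exists (d n). split; auto.
    intros E X HE HX HEd. apply Rnot_lt_le. intro Hlt. apply Hn2. exists (E, X). unfold P; simpl; auto. }
  set (sq := fun n => epsilon (inhabits (H0, H0)) (P n)).
  assert (Hsq : forall n, P n (sq n)) by (intros n; apply epsilon_spec, HP).
  set (En := fun n => fst (sq n)).
  assert (HEin : forall n, inDplus (En n)) by (intros n; apply (Hsq n)).
  assert (HEc : wconv En H0).
  { apply wconv_H0_intro; auto. intros s Hs e He'.
    destruct (archimed_cor1 (Rmin s e) ltac:(apply Rmin_pos; lra)) as [N [HN HN0]].
    exists N. intros n Hn3. destruct (Hsq n) as [HE [_ [Hv _]]]. fold (En n) in HE, Hv.
    assert (Hdn : d n <= / INR N).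
    { unfold d. apply Rinv_le_contravar. apply lt_0_INR; lia. apply le_INR; lia. }
    pose proof (Rmin_l s e). pose proof (Rmin_r s e).
    pose proof (dp_mono _ HE (d n) s ltac:(lra)). lra. }
  destruct (unif1 star Htf Hcont En HEin HEc t' t eta ltac:(lra) Htt He) as [N HN].
  destruct (Hsq N) as [HE [HX [_ Hlt]]].
  specialize (HN N (Nat.le_refl _) (snd (sq N)) HX). unfold En in HN. lra.
Qed.

Lemma PD_in G (D : G -> G -> dfun) star (HPM : PM_space (fun _ : G => True) D star) x y : inDplus (D x y).
Proof. apply HPM; auto. Qed.
Lemma PD_refl G (D : G -> G -> dfun) star (HPM : PM_space (fun _ : G => True) D star) x : D x x = H0.
Proof. apply (proj1 (proj2 HPM) x x I I); auto. Qed.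
Lemma PD_sym G (D : G -> G -> dfun) star (HPM : PM_space (fun _ : G => True) D star) x y : D x y = D y x.
Proof. apply HPM; auto. Qed.
Lemma PD_tri G (D : G -> G -> dfun) star (HPM : PM_space (fun _ : G => True) D star) x y z :
  ledf (star (D x y) (D y z)) (D x z).
Proof. apply HPM; auto. Qed.

Lemma cauchy_elim G (D : G -> G -> dfun) a : cauchy D a -> forall t, 0 < t -> forall e, 0 < e ->
  exists N, forall n p, (n >= N)%nat -> (p >= N)%nat -> 1 - e < D (a n) (a p) t.
Proof. intros H t Ht e He. destruct (H t (H0_cont t Ht) e He) as [N HN]. exists N. intros n p Hn Hp.
  specialize (HN n p Hn Hp). rewrite H0_pos in HN by auto. apply Rabs_def2 in HN. lra. Qed.

Lemma cauchy_intro G (D : G -> G -> dfun) a : (forall x y, inDplus (D x y)) ->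
  (forall t, 0 < t -> forall e, 0 < e ->
  exists N, forall n p, (n >= N)%nat -> (p >= N)%nat -> 1 - e < D (a n) (a p) t) -> cauchy D a.
Proof. intros Hin H t _ e He. destruct (Rle_dec t 0) as [r|r].
  - exists O. intros n1 p1 _ _. rewrite H0_npos by auto. rewrite (dp_neg _ (Hin _ _) t r). rewrite Rminus_0_r, Rabs_R0; lra.
  - destruct (H t ltac:(lra) e He) as [N HN]. exists N. intros n p Hn Hp. specialize (HN n p Hn Hp).
    rewrite H0_pos by lra. pose proof (dp_bnd _ (Hin (a n) (a p)) t). apply Rabs_def1; lra. Qed.

Definition PiS {G} (D : G -> G -> dfun) star (f : G -> dfun) (a : nat -> G) :=
  (forall x, inDplus (f x)) /\ (forall x y, ledf (star (D x y) (f y)) (f x)) /\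
  cauchy D a /\ (forall x, wconv (fun n => D (a n) x) (f x)).

Lemma InPi_PiS G (D : G -> G -> dfun) star f : InPi D star f -> exists a, PiS D star f a.
Proof. intros [H1 [H2 [a [H3 H4]]]]. exists a. unfold PiS. auto. Qed.

Lemma PiC1 G (D : G -> G -> dfun) star (HPM : PM_space (fun _ : G => True) D star) f a :
  PiS D star f a -> wconv (fun n => f (a n)) H0.
Proof. intros [Hin [Hlip [Hca Hcv]]]. apply wconv_H0_intro; auto. intros t Ht e He.
  destruct (cauchy_elim G D a Hca (t/2) ltac:(lra) (e/2) ltac:(lra)) as [N HN].
  exists N. intros n Hn.
  assert (1 - e/2 <= f (a n) t); [|lra].
  apply (wlim_lb (fun m => D (a m) (a n)) (f (a n))) with (t1 := t/2); auto.
  intros; apply (PD_in G D star HPM). lra.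
  exists N. intros k Hk. left. apply HN; auto. Qed.

Lemma PiC0 G (D : G -> G -> dfun) star (Htf : triangle_function star) (Hcont : continuous_tf star)
  (HPM : PM_space (fun _ : G => True) D star) g b :
  PiS D star g b -> forall x y, ledf (star (g x) (g y)) (D x y).
Proof. intros [Hin [Hlip [Hca Hcv]]] x y.
  apply (wlim_le (fun n => star (D (b n) x) (D (b n) y)) (fun _ => D x y)).
  - intros; apply (PD_in G D star HPM).
  - apply st_in; auto.
  - apply (PD_in G D star HPM).
  - apply Hcont; auto; intros; apply (PD_in G D star HPM).
  - apply wconv_const.
  - intros n. rewrite (PD_sym G D star HPM (b n) x). apply PD_tri; auto.
Qed.

Definition Sfam {G} star (f g : G -> dfun) : dfun -> Prop := fun H => exists x : G, H = star (f x) (g x).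

Lemma Sfam_in G star (Htf : triangle_function star) (f g : G -> dfun) :
  (forall x, inDplus (f x)) -> (forall x, inDplus (g x)) -> forall H, Sfam star f g H -> inDplus H.
Proof. intros Hf Hg H [x ->]. apply st_in; auto. Qed.

Lemma DD_in G star (Htf : triangle_function star) (f g : G -> dfun) :
  (forall x, inDplus (f x)) -> (forall x, inDplus (g x)) -> inDplus (DD star f g).
Proof. intros. apply supD_in. apply Sfam_in; auto. Qed.

Lemma DD_ge G star (Htf : triangle_function star) (f g : G -> dfun) :
  (forall x, inDplus (f x)) -> (forall x, inDplus (g x)) -> forall x, ledf (star (f x) (g x)) (DD star f g).
Proof. intros. apply supD_ge. apply Sfam_in; auto. exists x; auto. Qed.

Lemma PiK G (D : G -> G -> dfun) star (Htf : triangle_function star) (Hcont : continuous_tf star)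
  (HPM : PM_space (fun _ : G => True) D star) f g b :
  (forall x, inDplus (f x)) -> (forall x y, ledf (star (D x y) (f y)) (f x)) ->
  PiS D star g b -> wconv (fun n => f (b n)) (DD star f g).
Proof. intros Hfin Hflip Hg. pose proof Hg as [Hgin [Hglip [Hca Hcv]]].
  assert (HS := Sfam_in G star Htf f g Hfin Hgin).
  apply squeeze.
  - apply DD_in; auto.
  - intros t' t eta Htt He.
    destruct (supD_approx _ HS (ex_intro _ (star (f (b O)) (g (b O))) (ex_intro _ (b O) eq_refl)) t' eta He) as [H [[x ->] Hx]].
    fold (DD star f g) in Hx. unfold DD in Hx |- *.
    assert (Hz : wconv (fun n => star (f x) (D (b n) x)) (star (f x) (g x))).
    { apply Hcont; auto. intros; apply (PD_in G D star HPM). apply wconv_const. }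
    destruct (cpt _ (st_in star Htf _ _ (Hfin x) (Hgin x)) t' t Htt) as [s [Hs1 Hs2]].
    pose proof (dp_mono _ (st_in star Htf _ _ (Hfin x) (Hgin x)) t' s ltac:(lra)).
    destruct (cv_ev_gt _ _ (supD (Sfam star f g) t' - eta) (Hz s Hs2) ltac:(lra)) as [N HN].
    exists N. intros n Hn. specialize (HN n Hn). simpl in HN.
    assert (star (f x) (D (b n) x) s <= f (b n) s).
    { rewrite (st_comm star Htf (f x) (D (b n) x)); auto. apply Hflip. apply (PD_in G D star HPM). }
    pose proof (dp_mono _ (Hfin (b n)) s t ltac:(lra)). unfold Sfam in *. lra.
  - intros t' t eta Htt He.
    destruct (unif star Htf Hcont t' t eta Htt He) as [d [Hd Hu]].
    destruct (wconv_H0_elim _ (PiC1 G D star HPM g b Hg) d Hd d Hd) as [N HN].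
    exists N. intros n Hn. specialize (HN n Hn). simpl in HN.
    pose proof (Hu (g (b n)) (f (b n)) (Hgin _) (Hfin _) HN).
    pose proof (DD_ge G star Htf f g Hfin Hgin (b n) t). lra.
Qed.

Lemma PiC2 G (D : G -> G -> dfun) star (Htf : triangle_function star) (Hcont : continuous_tf star)
  (HPM : PM_space (fun _ : G => True) D star) f g b :
  (forall x, inDplus (f x)) -> (forall x y, ledf (star (D x y) (f y)) (f x)) ->
  PiS D star g b -> forall x, ledf (star (g x) (DD star f g)) (f x).
Proof. intros Hfin Hflip Hg x. pose proof Hg as [Hgin [Hglip [Hca Hcv]]].
  assert (HF := DD_in G star Htf f g Hfin Hgin).
  assert (H1 := PiK G D star Htf Hcont HPM f g b Hfin Hflip Hg).
  assert (H2 := PiC1 G D star HPM g b Hg).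
  assert (H3 : wconv (fun n => star (f (b n)) (g (b n))) (DD star f g)).
  { replace (DD star f g) with (star (DD star f g) H0) by (apply st_H0r; auto). apply Hcont; auto. apply H0_in. }
  apply (wlim_le (fun n => star (g x) (star (f (b n)) (g (b n)))) (fun _ => f x)); auto.
  - apply st_in; auto.
  - apply Hcont; auto. intros; apply st_in; auto. apply wconv_const.
  - apply wconv_const.
  - intros n. set (y := b n). rewrite (st_comm star Htf (f y) (g y)) by auto.
    rewrite st_assoc by auto. intros t.
    apply Rle_trans with (star (D x y) (f y) t); [|apply Hflip].
    apply st_mono_l; auto. apply st_in; auto. apply (PD_in G D star HPM).
    apply (PiC0 G D star Htf Hcont HPM g b Hg).
Qed.

Lemma DD_sym G star (Htf : triangle_function star) (f g : G -> dfun) :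
  (forall x, inDplus (f x)) -> (forall x, inDplus (g x)) -> DD star f g = DD star g f.
Proof. intros Hf Hg. unfold DD. f_equal. apply functional_extensionality. intros H.
  apply propositional_extensionality. split; intros [x ->]; exists x; apply st_comm; auto. Qed.

Lemma part1 G (D : G -> G -> dfun) star (Htf : triangle_function star)
  (HPM : PM_space (fun _ : G => True) D star) a b : DD star (delta D a) (delta D b) = D a b.
Proof. unfold DD. apply supD_eq.
  - apply (Sfam_in G star Htf (delta D a) (delta D b)); intros; apply (PD_in G D star HPM).
  - split; [apply (PD_in G D star HPM)|split].
    + intros H [x ->]. unfold delta. rewrite (PD_sym G D star HPM x a). apply PD_tri; auto.
    + intros U HU Hub. specialize (Hub (star (D a a) (D a b)) (ex_intro _ a eq_refl)).
      rewrite (PD_refl G D star HPM), st_H0l in Hub; auto. apply (PD_in G D star HPM).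
Qed.

Lemma delta_in G (D : G -> G -> dfun) star (HPM : PM_space (fun _ : G => True) D star) a :
  forall x, inDplus (delta D a x).
Proof. intros; apply (PD_in G D star HPM). Qed.

Lemma part4 G (D : G -> G -> dfun) star (Htf : triangle_function star)
  (HPM : PM_space (fun _ : G => True) D star) f : InPi D star f ->
  exists a : nat -> G, wconv (fun n => DD star (delta D (a n)) f) H0.
Proof. intros Hf. destruct (InPi_PiS G D star f Hf) as [a Ha]. exists a.
  pose proof Ha as [Hfin _].
  apply wconv_H0_intro. intros n; apply DD_in; auto. apply (delta_in G D star HPM).
  intros t Ht e He. destruct (wconv_H0_elim _ (PiC1 G D star HPM f a Ha) t Ht e He) as [N HN].
  exists N. intros n Hn. specialize (HN n Hn). simpl in HN.
  pose proof (DD_ge G star Htf (delta D (a n)) f (delta_in G D star HPM (a n)) Hfin (a n) t).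
  unfold delta at 1 in H. rewrite (PD_refl G D star HPM), st_H0l in H; auto. lra.
Qed.

Lemma part2 G (D : G -> G -> dfun) star (Htf : triangle_function star) (Hcont : continuous_tf star)
  (HPM : PM_space (fun _ : G => True) D star) : PM_space (InPi D star) (DD star) star.
Proof. split; [|split; [|split]].
  - intros p q Hp Hq. apply (DD_in G star Htf); [apply Hp|apply Hq].
  - intros p q Hp Hq. split.
    + intros Heq. destruct (InPi_PiS G D star p Hp) as [a Ha]. destruct (InPi_PiS G D star q Hq) as [b Hb].
      pose proof Ha as [Hpin [Hplip _]]. pose proof Hb as [Hqin [Hqlip _]].
      assert (E1 : forall x, ledf (q x) (p x)).
      { intros x t. pose proof (PiC2 G D star Htf Hcont HPM p q b Hpin Hplip Hb x t).
        rewrite Heq, st_H0r in H; auto. }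
      assert (E2 : forall x, ledf (p x) (q x)).
      { intros x t. pose proof (PiC2 G D star Htf Hcont HPM q p a Hqin Hqlip Ha x t).
        rewrite (DD_sym G star Htf q p), Heq, st_H0r in H; auto. }
      apply functional_extensionality. intros x. apply functional_extensionality. intros t.
      apply Rle_antisym; [apply E2|apply E1].
    + intros <-. destruct (InPi_PiS G D star p Hp) as [a Ha]. pose proof Ha as [Hpin _].
      apply functional_extensionality. intros t. apply Rle_antisym.
      apply dp_le_H0; apply DD_in; auto.
      destruct (Rle_dec t 0). rewrite H0_npos by auto. apply dp_bnd, DD_in; auto.
      rewrite H0_pos by lra.
      assert (Hc := PiC1 G D star HPM p a Ha).
      assert (W := Hcont _ _ _ _ (fun n => Hpin (a n)) (fun n => Hpin (a n)) H0_in H0_in Hc Hc).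
      rewrite (st_H0r star Htf H0 H0_in) in W. specialize (W t (H0_cont t ltac:(lra))).
      rewrite H0_pos in W by lra.
      apply (cv_ub _ _ _ W). exists O. intros k _. apply DD_ge; auto.
  - intros p q Hp Hq. apply DD_sym; auto. apply Hp. apply Hq.
  - intros p q r Hp Hq Hr. destruct (InPi_PiS G D star q Hq) as [b Hb].
    pose proof Hp as [Hpin [Hplip _]]. pose proof Hr as [Hrin [Hrlip _]]. pose proof Hb as [Hqin _].
    assert (K1 := PiK G D star Htf Hcont HPM p q b Hpin Hplip Hb).
    assert (K2 := PiK G D star Htf Hcont HPM r q b Hrin Hrlip Hb).
    rewrite (DD_sym G star Htf r q) in K2 by auto.
    apply (wlim_le (fun n => star (p (b n)) (r (b n))) (fun _ => DD star p r)).
    + intros; apply DD_in; auto.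
    + apply st_in; auto; apply DD_in; auto.
    + apply DD_in; auto.
    + apply Hcont; auto; apply DD_in; auto.
    + apply wconv_const.
    + intros n. apply DD_ge; auto.
Qed.

Lemma part3 G (D : G -> G -> dfun) star (Htf : triangle_function star) (Hcont : continuous_tf star)
  (HPM : PM_space (fun _ : G => True) D star) : complete (InPi D star) (DD star).
Proof. intros z Hz Hcz.
  assert (Hzin : forall n x, inDplus (z n x)) by (intros n; apply (Hz n)).
  assert (Hzlip : forall n x y, ledf (star (D x y) (z n y)) (z n x)) by (intros n; apply (Hz n)).
  assert (HDin := PD_in G D star HPM).
  destruct (InPi_PiS G D star (z O) (Hz O)) as [a0 _].
  set (d := fun n : nat => / INR (S n)).
  assert (Hd : forall n, 0 < d n) by (intros n; unfold d; apply Rinv_0_lt_compat, lt_0_INR; lia).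
  assert (Hex : forall k, exists y, 1 - d k < z k y (d k)).
  { intros k. destruct (InPi_PiS G D star (z k) (Hz k)) as [a Ha].
    destruct (wconv_H0_elim _ (PiC1 G D star HPM _ a Ha) (d k) (Hd k) (d k) (Hd k)) as [N HN].
    exists (a N). apply HN; lia. }
  set (c := fun k => epsilon (inhabits (a0 O)) (fun y => 1 - d k < z k y (d k))).
  assert (Hc : forall k, 1 - d k < z k (c k) (d k)) by (intros k; apply (epsilon_spec _ _ (Hex k))).
  assert (Hnear : forall del, 0 < del -> exists K, forall k, (k >= K)%nat -> 1 - del < z k (c k) del).
  { intros del Hdel. destruct (archimed_cor1 del Hdel) as [K [HK HK0]]. exists K. intros k Hk.
    assert (d k <= / INR K). { unfold d. apply Rinv_le_contravar. apply lt_0_INR; lia. apply le_INR; lia. }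
    pose proof (dp_mono _ (Hzin k (c k)) (d k) del ltac:(lra)). specialize (Hc k). lra. }
  assert (HzC : forall t, 0 < t -> forall e, 0 < e -> exists N, forall n p, (n >= N)%nat -> (p >= N)%nat ->
            1 - e < DD star (z n) (z p) t).
  { intros t Ht e He. apply (cauchy_elim _ (DD star) z Hcz t Ht e He). }
  assert (Hlow : forall n p y, ledf (star (z p y) (DD star (z n) (z p))) (z n y)).
  { intros n p y. destruct (InPi_PiS G D star (z p) (Hz p)) as [b Hb].
    apply (PiC2 G D star Htf Hcont HPM (z n) (z p) b); auto. }
  assert (HDDin : forall n p, inDplus (DD star (z n) (z p))) by (intros; apply DD_in; auto).
  assert (Hcc : cauchy D c).
  { apply cauchy_intro; auto. intros t Ht e He.
    destruct (unif star Htf Hcont (t/2) t (e/3) ltac:(lra) ltac:(lra)) as [d1 [Hd1 Hu1]].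
    destruct (unif star Htf Hcont (t/4) (t/2) (e/3) ltac:(lra) ltac:(lra)) as [d2 [Hd2 Hu2]].
    destruct (Hnear d1 Hd1) as [K1 HK1]. destruct (Hnear d2 Hd2) as [K2 HK2].
    destruct (HzC (t/4) ltac:(lra) (e/3) ltac:(lra)) as [N HN].
    exists (max N (max K1 K2)). intros n p Hn Hp.
    destruct (InPi_PiS G D star (z n) (Hz n)) as [bn Hbn].
    assert (A1 := PiC0 G D star Htf Hcont HPM (z n) bn Hbn (c n) (c p) t).
    assert (A2 : star (z n (c n)) (z n (c p)) t >=
                 star (z n (c n)) (star (z p (c p)) (DD star (z n) (z p))) t).
    { apply Rle_ge. apply (st_mono_r star Htf); auto. apply st_in; auto. }
    assert (A6 : star (z n (c n)) (star (z p (c p)) (DD star (z n) (z p))) = star (star (z p (c p)) (DD star (z n) (z p))) (z n (c n))) by (apply st_comm; auto; apply st_in; auto).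
    rewrite A6 in A2.
    assert (A3 := Hu1 (z n (c n)) (star (z p (c p)) (DD star (z n) (z p))) (Hzin _ _) (st_in star Htf _ _ (Hzin _ _) (HDDin _ _))
                   (HK1 n ltac:(lia))).
    assert (A5 : star (z p (c p)) (DD star (z n) (z p)) = star (DD star (z n) (z p)) (z p (c p))) by (apply st_comm; auto).
    assert (A4 := Hu2 (z p (c p)) (DD star (z n) (z p)) (Hzin _ _) (HDDin _ _) (HK2 p ltac:(lia))).
    rewrite <- A5 in A4.
    specialize (HN n p ltac:(lia) ltac:(lia)). lra. }
  assert (Hfex : forall x, exists F, inDplus F /\ wconv (fun n => D (c n) x) F).
  { intros x. apply wlim_exists; auto. intros t' t eta Htt He.
    destruct (unif star Htf Hcont t' t eta Htt He) as [d1 [Hd1 Hu1]].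
    destruct (cauchy_elim G D c Hcc d1 Hd1 d1 Hd1) as [N HN].
    exists N. intros n m Hn Hm.
    assert (B1 := PD_tri G D star HPM (c n) (c m) x t).
    rewrite (st_comm star Htf) in B1 by auto.
    pose proof (Hu1 (D (c n) (c m)) (D (c m) x) (HDin _ _) (HDin _ _) (HN n m Hn Hm)). lra. }
  set (f := fun x => epsilon (inhabits H0) (fun F => inDplus F /\ wconv (fun n => D (c n) x) F)).
  assert (Hf : forall x, inDplus (f x) /\ wconv (fun n => D (c n) x) (f x))
    by (intros x; apply (epsilon_spec _ _ (Hfex x))).
  assert (Hfin : forall x, inDplus (f x)) by (intros; apply Hf).
  assert (Hflip : forall x y, ledf (star (D x y) (f y)) (f x)).
  { intros x y. apply (wlim_le (fun n => star (D x y) (D (c n) y)) (fun n => D (c n) x)); auto.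
    - apply st_in; auto.
    - apply Hcont; auto. apply wconv_const. apply Hf.
    - apply Hf.
    - intros n. rewrite (st_comm star Htf) by auto. rewrite (PD_sym G D star HPM x y). apply PD_tri; auto. }
  assert (HfS : PiS D star f c) by (split; [auto|split; [auto|split; [auto|intros x; apply Hf]]]).
  exists f. split.
  { split; auto. split; auto. exists c. split; auto. intros; apply Hf. }
  apply wconv_H0_intro. intros; apply DD_in; auto.
  intros t Ht e He.
  destruct (HzC (t/4) ltac:(lra) (e/4) ltac:(lra)) as [N HN].
  destruct (unif star Htf Hcont (t/4) (t/2) (e/4) ltac:(lra) ltac:(lra)) as [d1 [Hd1 Hu1]].
  destruct (Hnear d1 Hd1) as [K1 HK1].
  exists N. intros n Hn.
  assert (Kc := PiK G D star Htf Hcont HPM (z n) f c (Hzin n) (Hzlip n) HfS).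
  assert (1 - e/2 <= DD star (z n) f t); [|lra].
  apply (wlim_lb (fun k => z n (c k)) (DD star (z n) f)) with (t1 := t/2); auto.
  apply DD_in; auto. lra.
  exists (max N K1). intros k Hk.
  assert (A1 := Hlow n k (c k) (t/2)). rewrite (st_comm star Htf) in A1 by auto.
  assert (A2 := Hu1 (z k (c k)) (DD star (z n) (z k)) (Hzin _ _) (HDDin _ _) (HK1 k ltac:(lia))).
  specialize (HN n k Hn ltac:(lia)). lra.
Qed.

Theorem mainTheorem11 (G : Type) (D : G -> G -> dfun) (star : dfun -> dfun -> dfun)
  (Htf : triangle_function star) (Hcont : continuous_tf star)
  (HPM : PM_space (fun _ : G => True) D star) :
  (forall a b : G, DD star (delta D a) (delta D b) = D a b) /\
  PM_space (InPi D star) (DD star) star /\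
  complete (InPi D star) (DD star) /\
  (forall f, InPi D star f ->
     exists a : nat -> G, wconv (fun n => DD star (delta D (a n)) f) H0).
Proof.
  split. intros; apply part1; auto.
  split. apply part2; auto.
  split. apply part3; auto.
  intros f Hf. apply part4; auto.
Qed.
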